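(* Let $G$ be an $X-Y$ normalized graph, let $S \subseteq N(X)$, and assume that no vertex of $S$ is adjacent to a vertex of $Y$. Then there is exactly one important witness $K(S)$ of $S$.
   Context: $G$ is a finite undirected graph and $X,Y$ are disjoint subsets of $V(G)$; $N(C)=(\bigcup_{v\in C}N(v))\setminus C$. An $X-Y$ separator is a set $K \subseteq V(G) \setminus (X \cup Y)$ such that $G \setminus K$ has no path from $X$ to $Y$; minimal means inclusion-minimal. $G$ is $X-Y$ normalized if $N(X)$ is the only minimum-cardinality $X-Y$ separator. Let $r$ be the minimum size of an $X-Y$ separator; the excess of an $X-Y$ separator $K$ is $|K|-r$. For $S\subseteq N(X)$, the cover excess $CE(S)$ is the excess of a smallest $X-Y$ separator disjoint with $S$ (infinite if $S$ is adjacent to $Y$). An $X-Y$ separator $K$ with $K\cap S=\emptyset$ and excess $CE(S)$ is a witness of $S$. $NR(G,Y,K)$ is the set of vertices not reachable from $Y$ in $G\setminus K$; $K \geq K'$ means $NR(G,Y,K)\supseteq NR(G,Y,K')$, and $K'<K$ means $K\geq K'$ and $NR(G,Y,K)\ne NR(G,Y,K')$. A minimal $X-Y$ separator $K$ is important if there is no $X-Y$ separator $K'$ with $K<K'$ and $|K|\geq|K'|$. An important witness of $S$ is a witness of $S$ that is an important $X-Y$ separator. *)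

(* Defs.v *)
(* A finite simple graph is a symmetric irreflexive relation
   e on a finType T; V(G) = T. *)
From mathcomp Require Import all_boot.
Set Implicit Arguments. Unset Strict Implicit. Unset Printing Implicit Defensive.

Section Sep.
Variables (T : finType) (e : rel T) (X Y : {set T}).

Definition nbh (C : {set T}) : {set T} :=
  [set v | (v \notin C) && [exists u in C, e u v]].

Definition del_rel (K : {set T}) : rel T :=
  [rel u v | [&& e u v, u \notin K & v \notin K]].

Definition separator (K : {set T}) : bool :=
  [disjoint K & X :|: Y] &&
  ~~ [exists x in X, exists y in Y, connect (del_rel K) x y].

Definition min_separator (K : {set T}) : Prop :=
  separator K /\ forall K', separator K' -> #|K| <= #|K'|.

Definition minimal_separator (K : {set T}) : Prop :=
  separator K /\ forall K', separator K' -> K' \subset K -> K' = K.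

Definition normalized : Prop :=
  forall K, min_separator K <-> K = nbh X.

Definition sep_number : nat :=
  \big[minn/#|T|.+1]_(K : {set T} | separator K) #|K|.

Definition excess (K : {set T}) : nat := #|K| - sep_number.

Definition adjacent_to (S B : {set T}) : bool :=
  [exists s in S, exists y in B, e s y].

(* cover excess; None stands for infinity *)
Definition cover_excess (S : {set T}) : option nat :=
  if adjacent_to S Y then None
  else Some (\big[minn/#|T|.+1]_(K : {set T} | separator K && [disjoint K & S])
               excess K).

Definition witness (S K : {set T}) : Prop :=
  separator K /\ [disjoint K & S] /\ cover_excess S = Some (excess K).

Definition NR (K : {set T}) : {set T} :=
  [set v | ~~ ((v \notin K) && [exists y in Y, connect (del_rel K) y v])].

Definition sep_ge (K K' : {set T}) : Prop := NR K' \subset NR K.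
Definition sep_lt (K' K : {set T}) : Prop := sep_ge K K' /\ NR K <> NR K'.

Definition important (K : {set T}) : Prop :=
  minimal_separator K /\
  ~ (exists K', separator K' /\ sep_lt K K' /\ #|K| >= #|K'|).

Definition important_witness (S K : {set T}) : Prop :=
  witness S K /\ important K.

End Sep.

(* Main.v *)
Require Import Defs.
From mathcomp Require Import all_boot.
From mathcomp Require Import zify.

Set Implicit Arguments. Unset Strict Implicit. Unset Printing Implicit Defensive.

Lemma disjI (T : finType) (A B : {set T}) :
  (forall x, x \in A -> x \in B -> False) -> [disjoint A & B].
Proof.
move=> H; apply/pred0P => x /=; apply/negbTE/negP => /andP[]; exact: H.
Qed.

Lemma conn_closed (T : finType) (r : rel T) (C : {set T}) x y :
  x \in C -> (forall u v, u \in C -> r u v -> v \in C) -> connect r x y -> y \in C.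
Proof.
move=> xC cl /connectP [p pth ->]; elim: p x xC pth => //= a p IH x xC /andP[rxa pth].
exact: IH (cl _ _ xC rxa) pth.
Qed.

Lemma bigmin_le_seq (I : eqType) (r : seq I) (P : pred I) (F : I -> nat) d i :
  i \in r -> P i -> \big[minn/d]_(j <- r | P j) F j <= F i.
Proof.
elim: r => //= a r IH; rewrite inE big_cons; case/orP => [/eqP<-|ir] Pi.
  by rewrite Pi geq_minl.
case: (P a); last exact: IH.
by rewrite geq_min IH ?orbT.
Qed.

Lemma bigmin_le (I : finType) (P : pred I) (F : I -> nat) d i :
  P i -> \big[minn/d]_(j | P j) F j <= F i.
Proof. by apply: bigmin_le_seq; rewrite mem_index_enum. Qed.

Lemma le_bigmin (I : finType) (P : pred I) (F : I -> nat) d m :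
  m <= d -> (forall i, P i -> m <= F i) -> m <= \big[minn/d]_(j | P j) F j.
Proof.
move=> md H; elim/big_ind: _ => // x y mx my; by rewrite leq_min mx my.
Qed.

Section Proof.
Variables (T : finType) (e : rel T) (X Y : {set T}).
Hypothesis esym : symmetric e.

Definition Uy K := ~: NR e Y K.

Lemma inU K v : (v \in Uy K) =
  (v \notin K) && [exists y in Y, connect (del_rel e K) y v].
Proof. by rewrite /Uy /NR inE in_set negbK. Qed.

Lemma del_sym K : symmetric (del_rel e K).
Proof.
move=> u v; rewrite /del_rel /= esym.
by case: (u \in K); case: (v \in K); rewrite /= ?andbF.
Qed.

Lemma sepP K x y : separator e X Y K -> x \in X -> y \in Y ->
  ~~ connect (del_rel e K) x y.
Proof.
case/andP => _ H xX yY; apply/negP => c; case/negP: H.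
by apply/existsP; exists x; rewrite xX; apply/existsP; exists y; rewrite yY.
Qed.

Lemma sep_notin K v : separator e X Y K -> v \in X :|: Y -> v \notin K.
Proof. by case/andP => D _ vXY; rewrite (disjointFl D vXY). Qed.

Lemma nbhU_sub K : nbh e (Uy K) \subset K.
Proof.
apply/subsetP => v; rewrite inE => /andP[vU /existsP[u /andP[uU euv]]].
apply/negPn/negP => vK; case/negP: vU.
move: uU; rewrite !inU => /andP[uK /existsP[y /andP[yY cyu]]].
rewrite vK /=; apply/existsP; exists y; rewrite yY /=.
by apply: connect_trans cyu (connect1 _); rewrite /del_rel /= euv uK vK.
Qed.

Lemma X_notU K x : separator e X Y K -> x \in X -> x \notin Uy K.
Proof.
move=> sK xX; rewrite inU negb_and; apply/orP; right.
apply/negP => /existsP[y /andP[yY cyx]].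
case/negP: (sepP sK xX yY); by rewrite (sym_connect_sym (del_sym K)).
Qed.

Lemma Y_U K y : separator e X Y K -> y \in Y -> y \in Uy K.
Proof.
move=> sK yY; rewrite inU sep_notin //; last by rewrite inE yY orbT.
by apply/existsP; exists y; rewrite yY connect0.
Qed.

Lemma step_closed (W : {set T}) u v : u \in W -> del_rel e (nbh e W) u v -> v \in W.
Proof.
move=> uW /andP[euv /andP[_ vN]]; apply/negPn/negP => vW; case/negP: vN.
by rewrite inE vW /=; apply/existsP; exists u; rewrite uW euv.
Qed.

Lemma nbh_sep (W : {set T}) : Y \subset W -> [disjoint W & X] ->
  [disjoint nbh e W & X :|: Y] -> separator e X Y (nbh e W).
Proof.
move=> YW dWX dN; rewrite /separator dN /=.
apply/negP => /existsP[x /andP[xX /existsP[y /andP[yY cxy]]]].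
move: cxy; rewrite (sym_connect_sym (del_sym _)) => cyx.
have xW : x \in W.
  apply: (conn_closed (subsetP YW _ yY) _ cyx) => u v; exact: step_closed.
by rewrite (disjointFr dWX xW) in xX.
Qed.

Lemma NR_nbh (W : {set T}) : Y \subset W -> ~: W \subset NR e Y (nbh e W).
Proof.
move=> YW; apply/subsetP => v; rewrite inE => vW; rewrite inE.
apply/negP => /andP[vN /existsP[y /andP[yY cyv]]]; case/negP: vW.
apply: (conn_closed (subsetP YW _ yY) _ cyv) => u w; exact: step_closed.
Qed.

Lemma nbhI_sub (A B : {set T}) : nbh e (A :&: B) \subset nbh e A :|: nbh e B.
Proof.
apply/subsetP => v; rewrite !inE negb_and => /andP[nAB /existsP[u]].
rewrite !inE => /andP[/andP[uA uB] euv].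
case/orP: nAB => [vA|vB]; apply/orP; [left|right]; rewrite ?vA ?vB /=;
  apply/existsP; exists u; by rewrite ?uA ?uB euv.
Qed.

Lemma nbhU_sub2 (A B : {set T}) : nbh e (A :|: B) \subset nbh e A :|: nbh e B.
Proof.
apply/subsetP => v; rewrite !inE negb_or => /andP[/andP[vA vB] /existsP[u]].
rewrite !inE => /andP[/orP[uA|uB] euv]; apply/orP; [left|right];
  rewrite ?vA ?vB /=; apply/existsP; exists u; by rewrite ?uA ?uB euv.
Qed.

Lemma nbhIU_sub (A B : {set T}) :
  nbh e (A :&: B) :&: nbh e (A :|: B) \subset nbh e A :&: nbh e B.
Proof.
apply/subsetP => v; rewrite !inE => /andP[/andP[_ /existsP[u]]].
rewrite !inE => /andP[/andP[uA uB] euv] /andP[]; rewrite negb_or => /andP[vA vB] _.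
rewrite vA vB /=; apply/andP; split; apply/existsP; exists u; by rewrite ?uA ?uB euv.
Qed.

Lemma submod (A B : {set T}) :
  #|nbh e (A :&: B)| + #|nbh e (A :|: B)| <= #|nbh e A| + #|nbh e B|.
Proof.
rewrite -cardsUI -(cardsUI (nbh e A)); apply: leq_add; apply: subset_leq_card.
  by rewrite subUset nbhI_sub nbhU_sub2.
exact: nbhIU_sub.
Qed.

Lemma sn_le K : separator e X Y K -> sep_number e X Y <= #|K|.
Proof. move=> sK; exact: bigmin_le. Qed.

Lemma witnessP S K : ~~ adjacent_to e S Y ->
  witness e X Y S K <-> [/\ separator e X Y K, [disjoint K & S] &
     forall K', separator e X Y K' -> [disjoint K' & S] -> #|K| <= #|K'|].
Proof.
move=> nadj; rewrite /witness /cover_excess (negbTE nadj); split.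
  case=> sK [dK [E]]; split => // K' sK' dK'.
  have : excess e X Y K <= excess e X Y K'.
    by rewrite -E; apply: bigmin_le; rewrite sK' dK'.
  rewrite /excess; have := sn_le sK; have := sn_le sK'; lia.
case=> sK dK H; split => //; split => //; congr Some; apply/eqP; rewrite eqn_leq.
rewrite bigmin_le ?sK ?dK //=; apply: le_bigmin.
  by rewrite /excess; apply: (leq_trans (leq_subr _ _)); apply: (leq_trans (max_card _)).
move=> K' /andP[sK' dK']; rewrite /excess; apply: leq_sub2r; exact: H.
Qed.

Lemma sepN K : separator e X Y K -> separator e X Y (nbh e (Uy K)).
Proof.
move=> sK; apply: nbh_sep.
- by apply/subsetP => y; exact: Y_U.
- by apply: disjI => x xU xX; move: (X_notU sK xX); rewrite xU.
- by apply: disjointWl (nbhU_sub K) _; case/andP: sK.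
Qed.

End Proof.

Theorem lemma2 (T : finType) (e : rel T) (X Y : {set T}) (S : {set T}) :
  symmetric e -> irreflexive e -> [disjoint X & Y] ->
  normalized e X Y ->
  S \subset nbh e X ->
  ~~ adjacent_to e S Y ->
  exists! K : {set T}, important_witness e X Y S K.
Proof.
move=> esym _ dXY norm SN nadj.
have sNX : separator e X Y (nbh e X) by case: (norm (nbh e X)) => _ /(_ erefl) [].
pose P := fun K : {set T} => separator e X Y K && [disjoint K & S].
have PK0 : P (~: (X :|: Y :|: S)).
  apply/andP; split; last first.
    by apply: disjI => v; rewrite !inE => /negP H vS; apply: H; rewrite vS orbT.
  apply/andP; split.
    by apply: disjI => v; rewrite !inE => /negP H /orP[] vv; apply: H; rewrite vv ?orbT.
  apply/negP => /existsP[x /andP[xX /existsP[y /andP[yY cxy]]]].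
  have : y \in X :|: S.
    apply: (conn_closed _ _ cxy); first by rewrite inE xX.
    move=> u v uXS; rewrite /del_rel /= !inE !negbK => /and3P[euv uK vK].
    case/orP: vK => [/orP[vX|vY]|vS]; rewrite ?vX ?vS ?orbT //.
    exfalso; move: uXS; rewrite inE => /orP[uX|uS].
      case/negP: (sepP sNX uX vY); apply: connect1; rewrite /del_rel /= euv.
      rewrite inE uX /= (sep_notin sNX) //; by rewrite inE vY orbT.
    case/negP: nadj; apply/existsP; exists u; rewrite uS; apply/existsP; exists v.
    by rewrite vY euv.
  rewrite inE => /orP[yX|yS].
    by rewrite (disjointFr dXY yX) in yY.
  have yN := subsetP SN _ yS.
  have : y \in X :|: Y by rewrite inE yY orbT.
  by move/(sep_notin sNX); rewrite yN.
case: (@arg_minnP _ _ P (fun K => #|K|) PK0) => Km PKm minKm.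
pose Q := fun K : {set T} => P K && (#|K| == #|Km|).
have QKm : Q Km by rewrite /Q PKm eqxx.
case: (@arg_maxnP _ _ Q (fun K => #|NR e Y K|) QKm) => Ki /andP[PKi /eqP cKi] maxKi.
have [sKi dKi] := andP PKi.
have wKi : witness e X Y S Ki.
  apply/(witnessP X _ nadj); split => // K' sK' dK'.
  by rewrite cKi; apply: minKm; rewrite /P sK' dK'.
have impKi : important e X Y Ki.
  split.
    split => // K' sK' sub; apply/eqP; rewrite eqEcard sub /= cKi.
    by apply: minKm; rewrite /P sK'; exact: disjointWl sub dKi.
  case=> K' [sK' [[ge neq] le]].
  pose N := nbh e (Uy e Y K').
  have NK' : N \subset K' := nbhU_sub _ _ _.
  have sN : separator e X Y N := sepN esym sK'.
  have dN : [disjoint N & S].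
    apply: disjI => s; rewrite inE => /andP[_ /existsP[u /andP[uU eus]]] sS.
    have uUi : u \in Uy e Y Ki.
      by move: uU; rewrite /Uy !in_setC; apply: contra; apply: (subsetP ge).
    move: uUi; rewrite inU => /andP[uKi /existsP[y /andP[yY cyu]]].
    move: (subsetP SN _ sS); rewrite inE => /andP[_ /existsP[x /andP[xX exs]]].
    have sKi' : s \notin Ki by rewrite (disjointFl dKi sS).
    have xKi : x \notin Ki by apply: (sep_notin sKi); rewrite inE xX.
    case/negP: (sepP sKi xX yY); rewrite (sym_connect_sym (del_sym esym Ki)).
    apply: connect_trans cyu _.
    apply: (@connect_trans _ _ s); apply: connect1; rewrite /del_rel /= ?uKi ?sKi' ?xKi //.
    by rewrite eus.
    by rewrite esym exs.
  have PN : P N by rewrite /P sN dN.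
  have cN : #|N| == #|Km|.
    rewrite eqn_leq minKm // andbT -cKi; apply: leq_trans le.
    exact: subset_leq_card.
  have := maxKi N (introT andP (conj PN cN)).
  have NRsub : NR e Y K' \subset NR e Y N.
    have h : Y \subset Uy e Y K' by apply/subsetP => y yY; exact: (Y_U sK' yY).
    by have := NR_nbh e h; rewrite /Uy setCK.
  have pr : NR e Y Ki \proper NR e Y N.
    apply: proper_sub_trans NRsub; rewrite properEneq ge andbT.
    by apply/eqP => E; apply: neq; rewrite E.
  by move=> h; have := leq_trans (proper_card pr) h; rewrite ltnn.
exists Ki; split; first by split.
move=> K2 [w2 imp2].
move/(witnessP X _ nadj): wKi => [_ _ m1].
move/(witnessP X _ nadj): w2 => [s2 d2 m2].
have e12 : #|Ki| = #|K2| by apply/eqP; rewrite eqn_leq m1 ?m2.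
have eqN : forall K, important e X Y K -> separator e X Y K -> nbh e (Uy e Y K) = K.
  move=> K [[_ minK] _] sK; apply: minK; [exact: sepN | exact: nbhU_sub].
pose W1 := Uy e Y Ki; pose W2 := Uy e Y K2.
have d12 : [disjoint Ki :|: K2 & X :|: Y].
  apply: disjI => v /setUP[] vK vXY.
    by move: (sep_notin sKi vXY); rewrite vK.
  by move: (sep_notin s2 vXY); rewrite vK.
have d12S : [disjoint Ki :|: K2 & S].
  apply: disjI => v /setUP[] vK vS.
    by rewrite (disjointFl dKi vS) in vK.
  by rewrite (disjointFl d2 vS) in vK.
have PW : forall W, nbh e W \subset Ki :|: K2 -> Y \subset W -> [disjoint W & X] ->
    P (nbh e W).
  move=> W sub YW dWX; rewrite /P (disjointWl sub d12S) andbT.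
  apply: (nbh_sep esym YW dWX); exact: disjointWl sub d12.
have sub12 : nbh e W1 :|: nbh e W2 \subset Ki :|: K2 by apply: setUSS; apply: nbhU_sub.
have PI : P (nbh e (W1 :&: W2)).
  apply: PW.
  - exact: subset_trans (nbhI_sub _ _ _) sub12.
  - by apply/subsetP => y yY; rewrite inE (Y_U sKi yY) (Y_U s2 yY).
  - apply: disjI => x; rewrite inE => /andP[xU _] xX.
    by move: (X_notU esym sKi xX); rewrite xU.
have PJ : P (nbh e (W1 :|: W2)).
  apply: PW.
  - exact: subset_trans (nbhU_sub2 _ _ _) sub12.
  - by apply/subsetP => y yY; rewrite inE (Y_U sKi yY) (Y_U s2 yY).
  - apply: disjI => x; rewrite inE => /orP[xU|xU] xX.
      by move: (X_notU esym sKi xX); rewrite xU.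
    by move: (X_notU esym s2 xX); rewrite xU.
have hJ : #|Ki| <= #|nbh e (W1 :|: W2)| by case/andP: PJ => ??; apply: m1.
have hsub := submod e W1 W2.
have c1 : #|nbh e W1| <= #|Ki| by apply: subset_leq_card; apply: nbhU_sub.
have c2 : #|nbh e W2| <= #|K2| by apply: subset_leq_card; apply: nbhU_sub.
have hI : #|nbh e (W1 :&: W2)| <= #|Ki|.
  rewrite -(leq_add2r #|nbh e (W1 :|: W2)|); apply: leq_trans hsub _.
  by rewrite -e12 in c2; apply: leq_add c1 (leq_trans c2 hJ).
have [sI _] := andP PI.
have NRI : forall K, K = Ki \/ K = K2 -> NR e Y K \subset NR e Y (nbh e (W1 :&: W2)).
  move=> K HK; apply: subset_trans (NR_nbh _ _); last first.
    by apply/subsetP => y yY; rewrite inE (Y_U sKi yY) (Y_U s2 yY).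
  have : W1 :&: W2 \subset Uy e Y K by case: HK => ->; [apply: subsetIl | apply: subsetIr].
  by rewrite -setCS /Uy setCK.
have E : forall K, important e X Y K -> K = Ki \/ K = K2 -> #|nbh e (W1 :&: W2)| <= #|K| ->
    NR e Y (nbh e (W1 :&: W2)) = NR e Y K.
  move=> K [_ nK] HK le; apply/eqP; apply: contraT => ne; case: nK.
  exists (nbh e (W1 :&: W2)); split => //; split => //; split; first exact: NRI.
  exact/eqP.
have E1 := E Ki impKi (or_introl erefl) hI.
have E2 := E K2 imp2 (or_intror erefl) (leq_trans hI (eq_leq e12)).
rewrite -(eqN _ impKi sKi) -(eqN _ imp2 s2) /Uy -E1 E2 //.
Qed.
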